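(* Assume $\alpha>\beta+1$, $\beta\ge0$, $\theta>0$, and $\alpha-\beta-1\ge4\theta(\beta+1)$. Let $\rho\in\mathbb R$, let $u(\cdot,\rho)$ be the solution on $[0,\infty)$ of $L(u)+e^{u}=0$, $u(0)=\rho$, $u'(0)=0$, and let $u^*(r)=\ln\{\theta^{\beta+1}(\alpha-\beta-1)\}-\theta\ln r$. Then $u(r,\rho)\neq u^*(r)$ for all $r>0$.
   Context: $L(u)(r)=r^{-\gamma}(r^{\alpha}|u'(r)|^{\beta}u'(r))'$ and $\theta=\gamma+2+\beta-\alpha$. For the $k$-Hessian ($\alpha=d-k$, $\beta=k-1$, $\gamma=d-1$) the condition reads $d\ge 2k+8k^2$. *)

(* Defs.v *)
From Stdlib Require Import Reals.
From Coquelicot Require Import Coquelicot.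
Open Scope R_scope.

(* |p|^b * p, with the value 0 at p = 0 (the correct value for b >= 0). *)
Definition signed_pow (b p : R) : R :=
  if Req_EM_T p 0 then 0 else Rpower (Rabs p) b * p.

Definition theta (a b g : R) : R := g + 2 + b - a.

(* Classical solution on [0,oo) of
     r^{-g} (r^a |u'|^b u')' + e^u = 0,  u(0) = rho,  u'(0) = 0
   (u'(0) is the right derivative at 0; the flux r^a |u'|^b u' is
   differentiable on (0,oo) with derivative -r^g e^{u}). *)
Definition is_solution (a b g rho : R) (u : R -> R) : Prop :=
  u 0 = rho /\
  filterlim (fun h => (u h - u 0) / h) (at_right 0) (locally 0) /\
  (forall r, 0 < r -> ex_derive u r) /\
  (forall r, 0 < r ->
     is_derive (fun s => Rpower s a * signed_pow b (Derive u s)) r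
               (- (Rpower r g * exp (u r)))).

Definition u_star (a b g r : R) : R :=
  ln (Rpower (theta a b g) (b + 1) * (a - b - 1)) - theta a b g * ln r.

(* Main.v *)
Require Import Defs.
From Stdlib Require Import Reals Lra Psatz.
From Coquelicot Require Import Coquelicot.
Open Scope R_scope.

Lemma cont_eps f x l : derivable_pt_lim f x l -> forall eps, 0 < eps -> exists d, 0 < d /\ forall y, Rabs (y - x) < d -> Rabs (f y - f x) < eps.
Proof.
  intros H eps He.
  assert (C: continuity_pt f x). { apply derivable_continuous_pt. exists l. exact H. }
  destruct (C eps He) as [d [Hd Hy]].
  exists d; split; auto. intros y Hy'.
  destruct (Req_dec y x) as [->|Hn]. rewrite Rminus_eq_0, Rabs_R0; auto.
  apply Hy. split. split. exact I. auto. exact Hy'.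
Qed.

Lemma lim_eps (u : R -> R) : filterlim (fun h => (u h - u 0) / h) (at_right 0) (locally 0) ->
  forall eps, 0 < eps -> exists d, 0 < d /\ forall h, 0 < h < d -> Rabs ((u h - u 0) / h) < eps.
Proof.
  intros H eps He.
  apply filterlim_locally with (eps := mkposreal eps He) in H.
  destruct H as [d Hd]. exists d. split. apply cond_pos.
  intros h [H1 H2]. specialize (Hd h). 
  assert (B : ball 0 d h).
  { unfold ball; simpl; unfold AbsRing_ball, abs, minus, plus, opp; simpl. 
    rewrite Ropp_0, Rplus_0_r, Rabs_right; lra. }
  specialize (Hd B H1). revert Hd.
  unfold ball; simpl; unfold AbsRing_ball, abs, minus, plus, opp; simpl.
  rewrite Ropp_0, Rplus_0_r. auto.
Qed.

Lemma signed_cases a b r x : 0 < r ->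
  (x = 0 /\ - (Rpower r a * signed_pow b x) = 0) \/
  (x < 0 /\ - (Rpower r a * signed_pow b x) = exp (a * ln r + (b+1) * ln (-x))) \/
  (0 < x /\ - (Rpower r a * signed_pow b x) = - exp (a * ln r + (b+1) * ln x)).
Proof.
  intros Hr. unfold signed_pow, Rpower.
  destruct (Req_EM_T x 0) as [E|E].
  - left. split; auto. ring.
  - destruct (Rlt_dec x 0) as [L|L].
    + right; left. split; auto. rewrite Rabs_left by auto.
      replace (a * ln r + (b + 1) * ln (- x)) with (a * ln r + (b * ln (-x) + ln (-x))) by ring.
      rewrite !exp_plus, exp_ln by lra. ring.
    + right; right. split. lra. rewrite Rabs_right by lra.
      replace (a * ln r + (b + 1) * ln x) with (a * ln r + (b * ln x + ln x)) by ring.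
      rewrite !exp_plus, exp_ln by lra. ring.
Qed.

Lemma exp_le_inv' x y : exp x <= exp y -> x <= y.
Proof. intros H. destruct (Rle_lt_dec x y); auto. apply exp_increasing in r. lra. Qed.

Lemma phi_pos (a b g : R) (u Phi : R -> R) : 0 < a -> 0 <= b ->
  filterlim (fun h => (u h - u 0) / h) (at_right 0) (locally 0) ->
  (forall s, 0 < s -> derivable_pt_lim u s (Derive u s)) ->
  (forall s, 0 < s -> derivable_pt_lim Phi s (exp (g * ln s) * exp (u s))) ->
  (forall s, 0 < s -> Phi s = - (Rpower s a * signed_pow b (Derive u s))) ->
  forall r, 0 < r -> 0 < Phi r.
Proof.
  intros Ha Hb Hlim Du DP Pdef r Hr.
  destruct (Rle_lt_dec (Phi r) 0) as [Hle|]; [exfalso|auto].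
  set (r1 := r / 2).
  assert (Hr1 : 0 < r1) by (unfold r1; lra).
  assert (Hmono : forall s t, 0 < s -> s < t -> Phi s < Phi t).
  { intros s t Hs Hst.
    destruct (MVT_cor2 Phi (fun s => exp (g * ln s) * exp (u s)) s t Hst) as [c [Hc1 Hc2]].
    { intros c Hc. apply DP. lra. }
    assert (0 < exp (g * ln c) * exp (u c)) by (apply Rmult_lt_0_compat; apply exp_pos).
    nra. }
  assert (Hlt : Phi r1 < Phi r) by (apply Hmono; unfold r1; lra).
  set (c0 := - Phi r1).
  assert (Hc0 : 0 < c0) by (unfold c0; lra).
  set (kap := exp ((ln c0 - a * ln r1) / (b + 1))).
  assert (Hkap : 0 < kap) by apply exp_pos.
  assert (Hder : forall s, 0 < s <= r1 -> kap <= Derive u s).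
  { intros s [Hs1 Hs2].
    assert (Hps : Phi s <= Phi r1).
    { destruct (Req_dec s r1) as [->|Hn]; [lra|]. left; apply Hmono; lra. }
    rewrite Pdef in Hps by lra.
    destruct (signed_cases a b s (Derive u s) Hs1) as [[_ E]|[[_ E]|[Hx E]]];
      rewrite E in Hps.
    - lra.
    - pose proof (exp_pos (a * ln s + (b + 1) * ln (- Derive u s))). lra.
    - assert (Hl : ln c0 <= a * ln s + (b + 1) * ln (Derive u s)).
      { apply exp_le_inv'. rewrite exp_ln by lra. unfold c0. lra. }
      assert (Hls : ln s <= ln r1) by (apply ln_le; lra).
      assert (Q : (ln c0 - a * ln r1) / (b + 1) <= ln (Derive u s)).
      { apply (Rmult_le_reg_r (b + 1)); [lra|].
        replace ((ln c0 - a * ln r1) / (b + 1) * (b + 1)) with (ln c0 - a * ln r1) by (field; lra).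
        nra. }
      unfold kap. rewrite <- (exp_ln (Derive u s)) by lra.
      destruct Q as [Q|Q]; [left; apply exp_increasing; auto| rewrite Q; lra]. }
  destruct (lim_eps u Hlim (kap / 4)) as [d [Hd Hdd]]; [lra|].
  set (h := Rmin (d / 2) r1).
  assert (Hh1 : 0 < h) by (unfold h; apply Rmin_pos; lra).
  assert (Hh2 : h <= d / 2) by apply Rmin_l.
  assert (Hh3 : h <= r1) by apply Rmin_r.
  destruct (MVT_cor2 u (Derive u) (h / 2) h) as [xi [Hxi1 Hxi2]]; [lra| |].
  { intros c Hc. apply Du. lra. }
  assert (Kx : kap <= Derive u xi) by (apply Hder; lra).
  pose proof (Hdd h ltac:(lra)) as A1.
  pose proof (Hdd (h / 2) ltac:(lra)) as A2.
  set (A := (u h - u 0) / h) in *.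
  set (B := (u (h / 2) - u 0) / (h / 2)) in *.
  assert (EA : u h - u 0 = A * h) by (unfold A; field; lra).
  assert (EB : u (h / 2) - u 0 = B * (h / 2)) by (unfold B; field; lra).
  apply Rabs_def2 in A1. apply Rabs_def2 in A2.
  nra.
Qed.

Lemma DW (u : R -> R) th lnC s : 0 < s -> derivable_pt_lim u s (Derive u s) ->
  derivable_pt_lim (fun s => u s - lnC + th * ln s) s (Derive u s + th / s).
Proof.
  intros Hs Du. apply is_derive_Reals. apply is_derive_Reals in Du.
  replace (Derive u s + th / s) with (Derive u s - 0 + th * / s) by (field; lra).
  apply (is_derive_plus (fun s => u s - lnC) (fun s => th * ln s)).
  apply (is_derive_minus u (fun _ => lnC)). auto. apply is_derive_Reals, derivable_pt_lim_const.
  apply is_derive_scal. apply is_derive_ln. auto.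
Qed.

Lemma DH (Phi W : R -> R) dP dW k th m s : 0 < s ->
  derivable_pt_lim Phi s dP -> derivable_pt_lim W s dW ->
  derivable_pt_lim (fun s => Phi s - exp (k * ln th + m * ln s + 2 * W s)) s
    (dP - exp (k * ln th + m * ln s + 2 * W s) * (m / s + 2 * dW)).
Proof.
  intros Hs D1 D2. apply is_derive_Reals. apply is_derive_Reals in D1, D2.
  apply (is_derive_minus Phi (fun s => exp (k * ln th + m * ln s + 2 * W s))). auto.
  replace (exp (k * ln th + m * ln s + 2 * W s) * (m / s + 2 * dW))
    with (scal (0 + m * / s + 2 * dW) (exp (k * ln th + m * ln s + 2 * W s)))
    by (unfold scal; simpl; unfold mult; simpl; field; lra).
  apply (is_derive_comp exp (fun s => k * ln th + m * ln s + 2 * W s)).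
  apply is_derive_exp.
  apply (is_derive_plus (fun s => k * ln th + m * ln s) (fun s => 2 * W s)).
  apply (is_derive_plus (fun s => k * ln th) (fun s => m * ln s)).
  apply is_derive_Reals, derivable_pt_lim_const. apply is_derive_scal. apply is_derive_ln. auto.
  apply is_derive_scal. auto.
Qed.

Lemma DP (a b g : R) (u : R -> R) s : 0 < s ->
  is_derive (fun s => Rpower s a * signed_pow b (Derive u s)) s (- (Rpower s g * exp (u s))) ->
  derivable_pt_lim (fun s => - (Rpower s a * signed_pow b (Derive u s))) s (exp (g * ln s) * exp (u s)).
Proof.
  intros Hs D. apply is_derive_Reals.
  replace (exp (g * ln s) * exp (u s)) with (- (- (Rpower s g * exp (u s)))) by (unfold Rpower; ring).
  apply (is_derive_opp (fun s => Rpower s a * signed_pow b (Derive u s))). auto.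
Qed.

Lemma left_incr f x l : derivable_pt_lim f x l -> l < 0 -> forall d, 0 < d ->
  exists y, x - d < y < x /\ f x < f y.
Proof.
  intros D Hl d Hd. destruct (D (- l / 2) ltac:(lra)) as [del Hdel].
  pose proof (cond_pos del).
  set (h := - Rmin del d / 2).
  assert (Hm1 : Rmin del d <= del) by apply Rmin_l.
  assert (Hm2 : Rmin del d <= d) by apply Rmin_r.
  assert (Hm0 : 0 < Rmin del d) by (apply Rmin_pos; lra).
  specialize (Hdel h ltac:(unfold h; lra)).
  assert (Rabs h < del) by (unfold h; rewrite Rabs_left; lra).
  specialize (Hdel H0). apply Rabs_def2 in Hdel. destruct Hdel as [Q1 Q2].
  exists (x + h). split. unfold h; lra.
  set (q := (f (x + h) - f x) / h) in *.
  assert (f (x + h) - f x = q * h) by (unfold q; field; unfold h; lra).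
  assert (h < 0) by (unfold h; lra). nra.
Qed.

Lemma sign_alg Y m th E p : 0 < Y -> 0 < E <= 1 -> 0 < th -> 4 * th <= m -> th * (E * E) <= p ->
  0 <= Y * (m - E * (m + 2 * th - 2 * p)).
Proof.
  intros HY HE Ht Hm Hp. apply Rmult_le_pos; [lra|].
  assert (0 <= (1 - E) * (m - 2 * th * E - 2 * th * E * E)).
  { apply Rmult_le_pos. lra.
    assert (th * E <= th) by nra. assert (th * E * E <= th * E) by nra. nra. }
  assert (0 <= 2 * E * (p - th * (E * E))) by (apply Rmult_le_pos; lra).
  nra.
Qed.

Theorem theorem1p7 (a b g rho : R) (u : R -> R) :
  a > b + 1 -> b >= 0 -> theta a b g > 0 ->
  a - b - 1 >= 4 * theta a b g * (b + 1) ->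
  is_solution a b g rho u ->
  forall r, 0 < r -> u r <> u_star a b g r.
Proof.
  intros Ha Hb Ht Hc [Hu0 [Hlim [Hex Hode]]] T HT HeqT.
  set (th := theta a b g) in *.
  set (m := a - b - 1) in *.
  set (k := b + 1) in *.
  assert (Hg : g = th + m - 1) by (unfold th, m, theta; ring).
  assert (Hk : 1 <= k) by (unfold k; lra).
  assert (Hm4 : 4 * th <= m) by nra.
  assert (Hmpos : 0 < m) by (unfold m, k in *; lra).
  assert (Du : forall s, 0 < s -> derivable_pt_lim u s (Derive u s)).
  { intros s Hs. apply is_derive_Reals, Derive_correct, Hex, Hs. }
  set (Phi := fun s => - (Rpower s a * signed_pow b (Derive u s))).
  assert (DPhi : forall s, 0 < s -> derivable_pt_lim Phi s (exp (g * ln s) * exp (u s))).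
  { intros s Hs. apply DP; auto. }
  assert (Ppos : forall s, 0 < s -> 0 < Phi s).
  { apply (phi_pos a b g u Phi); auto; lra. }
  assert (Prel : forall s, 0 < s -> Derive u s < 0 /\ Phi s = exp (a * ln s + k * ln (- Derive u s))).
  { intros s Hs. pose proof (Ppos s Hs) as P. unfold Phi in P |- *.
    destruct (signed_cases a b s (Derive u s) Hs) as [[_ E]|[[X E]|[_ E]]]; rewrite E in P |- *.
    - lra.
    - auto.
    - pose proof (exp_pos (a * ln s + (b + 1) * ln (Derive u s))). lra. }
  set (lnC := ln (Rpower th (b + 1) * (a - b - 1))).
  assert (HlnC : lnC = k * ln th + ln m).
  { unfold lnC. rewrite ln_mult. unfold Rpower. rewrite ln_exp. reflexivity.
    unfold Rpower; apply exp_pos. exact Hmpos. }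
  set (W := fun s => u s - lnC + th * ln s).
  assert (DWs : forall s, 0 < s -> derivable_pt_lim W s (Derive u s + th / s)).
  { intros s Hs. apply DW; auto. }
  assert (WT : W T = 0).
  { unfold W. rewrite HeqT. unfold u_star. fold th. fold lnC. ring. }
  set (H := fun s => Phi s - exp (k * ln th + m * ln s + 2 * W s)).
  set (dH := fun s => exp (g * ln s) * exp (u s) - exp (k * ln th + m * ln s + 2 * W s) * (m / s + 2 * (Derive u s + th / s))).
  assert (DHs : forall s, 0 < s -> derivable_pt_lim H s (dH s)).
  { intros s Hs. apply DH; auto. }
  assert (Ha' : a = m + k) by (unfold m, k; ring).
  assert (Hth : 0 < th) by lra.
  assert (Ekey : forall s, 0 < s -> exists Y q, 0 < Y /\ 0 < q /\ Derive u s = - q /\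
     dH s = Y * (m - exp (W s) * (m + 2 * th - 2 * (s * q))) /\
     (H s = exp (a * ln s + k * ln q) - exp (k * ln th + m * ln s + 2 * W s))).
  { intros s Hs. destruct (Prel s Hs) as [Hd HP].
    exists (exp (k * ln th + (m - 1) * ln s + W s)), (- Derive u s).
    split. apply exp_pos. split. lra. split. ring. split.
    - unfold dH.
      assert (E1 : exp (g * ln s) * exp (u s) = exp (k * ln th + (m - 1) * ln s + W s) * m).
      { rewrite <- exp_plus. rewrite <- (exp_ln m) at 2 by lra. rewrite <- exp_plus.
        f_equal. unfold W. rewrite Hg, HlnC. ring. }
      assert (E2 : exp (k * ln th + m * ln s + 2 * W s) = exp (k * ln th + (m - 1) * ln s + W s) * exp (W s) * s).
      { replace (exp (k * ln th + (m - 1) * ln s + W s) * exp (W s) * s) with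
          (exp (k * ln th + (m - 1) * ln s + W s) * exp (W s) * exp (ln s)) by (rewrite exp_ln; lra).
        rewrite <- !exp_plus. f_equal. ring. }
      rewrite E1, E2. field. lra.
    - unfold H. rewrite HP. reflexivity. }
  assert (HDpos : forall s, 0 < s -> W s <= 0 -> 0 <= H s -> 0 <= dH s).
  { intros s Hs HW HH. destruct (Ekey s Hs) as [Y [q [HY [Hq [_ [EdH EH]]]]]].
    rewrite EdH. rewrite EH in HH.
    assert (L1 : k * ln th + m * ln s + 2 * W s <= a * ln s + k * ln q) by (apply exp_le_inv'; lra).
    assert (L2 : ln th + 2 * W s <= ln s + ln q).
    { apply (Rmult_le_reg_l k). lra. rewrite Ha' in L1. nra. }
    assert (L3 : th * (exp (W s) * exp (W s)) <= s * q).
    { replace (th * (exp (W s) * exp (W s))) with (exp (ln th + 2 * W s)).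
      replace (s * q) with (exp (ln s + ln q)).
      destruct L2 as [L2|L2]; [left; apply exp_increasing; auto | rewrite L2; lra].
      rewrite exp_plus, !exp_ln; lra.
      replace (2 * W s) with (W s + W s) by ring. rewrite !exp_plus, exp_ln; lra. }
    apply sign_alg; auto. split. apply exp_pos.
    rewrite <- exp_0. destruct HW as [HW|HW]; [left; apply exp_increasing; auto| rewrite HW; lra]. }
  assert (HDneg : forall s, 0 < s -> W s = 0 -> 0 < H s -> Derive u s + th / s < 0).
  { intros s Hs HW HH. destruct (Ekey s Hs) as [Y [q [HY [Hq [Hdq [EdH EH]]]]]].
    rewrite EH in HH. rewrite HW in HH.
    assert (L1 : k * ln th + m * ln s + 2 * 0 < a * ln s + k * ln q).
    { destruct (Rlt_or_le (k * ln th + m * ln s + 2 * 0) (a * ln s + k * ln q)) as [X|X]; auto.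
      destruct X as [X|X]. apply exp_increasing in X. lra. rewrite X in HH. lra. }
    assert (L2 : ln th < ln s + ln q).
    { apply (Rmult_lt_reg_l k). lra. rewrite Ha' in L1. nra. }
    rewrite <- ln_mult in L2 by lra. apply ln_lt_inv in L2; [|lra|nra].
    rewrite Hdq. apply (Rmult_lt_reg_l s). lra. field_simplify; lra. }
  assert (Hdel : exists del, 0 < del < T /\ W del < 0 /\ 0 < H del).
  { destruct (lim_eps u Hlim 1) as [d0 [Hd0 Hd0']]; [lra|].
    assert (Ub : forall h, 0 < h -> h < Rmin d0 1 -> u 0 - 1 < u h < u 0 + 1).
    { intros h Hh1 Hh2. assert (Rmin d0 1 <= d0) by apply Rmin_l. assert (Rmin d0 1 <= 1) by apply Rmin_r.
      pose proof (Hd0' h ltac:(lra)) as A. set (A0 := (u h - u 0) / h) in *.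
      assert (u h - u 0 = A0 * h) by (unfold A0; field; lra).
      apply Rabs_def2 in A. nra. }
    assert (Hl2 : 0 < ln 2) by (rewrite <- ln_1; apply ln_increasing; lra).
    set (G := Rabs g).
    set (L := - (G + 1) * ln 2 - u 0 - 3 - k * ln th + 2 * lnC).
    set (Z := Rmin (Rmin (L / th) ((lnC - u 0 - 1) / th)) (Rmin (ln (Rmin d0 1)) (ln T)) - 1).
    assert (Z1 : Z < L / th) by (unfold Z; pose proof (Rmin_l (L / th) ((lnC - u 0 - 1) / th));
       pose proof (Rmin_l (Rmin (L / th) ((lnC - u 0 - 1) / th)) (Rmin (ln (Rmin d0 1)) (ln T))); lra).
    assert (Z2 : Z < (lnC - u 0 - 1) / th) by (unfold Z; pose proof (Rmin_r (L / th) ((lnC - u 0 - 1) / th));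
       pose proof (Rmin_l (Rmin (L / th) ((lnC - u 0 - 1) / th)) (Rmin (ln (Rmin d0 1)) (ln T))); lra).
    assert (Z3 : Z < ln (Rmin d0 1)) by (unfold Z; pose proof (Rmin_l (ln (Rmin d0 1)) (ln T));
       pose proof (Rmin_r (Rmin (L / th) ((lnC - u 0 - 1) / th)) (Rmin (ln (Rmin d0 1)) (ln T))); lra).
    assert (Z4 : Z < ln T) by (unfold Z; pose proof (Rmin_r (ln (Rmin d0 1)) (ln T));
       pose proof (Rmin_r (Rmin (L / th) ((lnC - u 0 - 1) / th)) (Rmin (ln (Rmin d0 1)) (ln T))); lra).
    assert (Hm0 : 0 < Rmin d0 1) by (apply Rmin_pos; lra).
    set (del := exp Z).
    assert (Hdp : 0 < del) by apply exp_pos.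
    assert (Hdm : del < Rmin d0 1) by (unfold del; rewrite <- (exp_ln (Rmin d0 1)) by lra; apply exp_increasing; lra).
    assert (HdT : del < T) by (unfold del; rewrite <- (exp_ln T) by lra; apply exp_increasing; lra).
    assert (Hld : ln del = Z) by (unfold del; apply ln_exp).
    assert (TZ1 : th * Z < L) by (apply (Rmult_lt_compat_l th) in Z1; [|lra];
        replace (th * (L / th)) with L in Z1 by (field; lra); lra).
    assert (TZ2 : th * Z < lnC - u 0 - 1) by (apply (Rmult_lt_compat_l th) in Z2; [|lra];
        replace (th * ((lnC - u 0 - 1) / th)) with (lnC - u 0 - 1) in Z2 by (field; lra); lra).
    pose proof (Ub del Hdp Hdm) as Ud.
    assert (HWd : W del < 0) by (unfold W; rewrite Hld; lra).
    exists del. split. lra. split. exact HWd.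
    destruct (MVT_cor2 Phi (fun s => exp (g * ln s) * exp (u s)) (del / 2) del) as [xi [Hxi1 Hxi2]]; [lra| |].
    { intros c Hc0. apply DPhi. lra. }
    pose proof (Ppos (del / 2) ltac:(lra)) as Ph2.
    pose proof (Ub xi ltac:(lra) ltac:(lra)) as Ux.
    assert (Lx1 : ln (del / 2) < ln xi) by (apply ln_increasing; lra).
    assert (Lx2 : ln xi < ln del) by (apply ln_increasing; lra).
    unfold Rdiv in Lx1. rewrite ln_mult, ln_Rinv in Lx1 by lra. rewrite Hld in Lx1, Lx2.
    assert (Gx : g * Z - G * ln 2 <= g * ln xi).
    { unfold G. destruct (Rle_or_lt 0 g) as [Hg0|Hg0].
      rewrite Rabs_right by lra. nra. rewrite Rabs_left by lra. nra. }
    assert (Lw : exp (g * Z - G * ln 2 + (u 0 - 1) + (Z - ln 2)) <= exp (g * ln xi) * exp (u xi) * (del - del / 2)).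
    { replace (del - del / 2) with (exp (Z - ln 2)).
      rewrite <- !exp_plus. destruct (Rle_lt_or_eq_dec _ _ (Rle_refl 0)); 
      apply Rlt_le, exp_increasing; lra.
      unfold Rminus. rewrite exp_plus, exp_Ropp, exp_ln by lra. fold del. field. }
    assert (Lx : k * ln th + m * ln del + 2 * W del < g * Z - G * ln 2 + (u 0 - 1) + (Z - ln 2)).
    { unfold W. rewrite Hld. rewrite Hg. unfold L in TZ1. lra. }
    apply exp_increasing in Lx.
    unfold H. lra. }
  destruct Hdel as [del [[Hd1 Hd2] [HWd HHd]]].
  set (E0 := fun x => del <= x <= T /\ forall y, del <= y <= x -> W y < 0 /\ 0 < H y).
  destruct (completeness E0) as [sp [Hub Hleast]].
  { exists T. intros x [[_ Hx] _]. exact Hx. }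
  { exists del. split. lra. intros y Hy. replace y with del by lra. auto. }
  assert (S1 : del <= sp) by (apply Hub; split; [lra| intros y Hy; replace y with del by lra; auto]).
  assert (S2 : sp <= T) by (apply Hleast; intros x [[_ Hx] _]; exact Hx).
  assert (Hi : forall y, del <= y < sp -> W y < 0 /\ 0 < H y).
  { intros y Hy. destruct (Rlt_dec (W y) 0) as [A|A]; destruct (Rlt_dec 0 (H y)) as [B|B]; auto;
    exfalso; assert (UB : is_upper_bound E0 y) by
      (intros x [Hx1 Hx2]; destruct (Rle_dec x y) as [C|C]; auto;
       destruct (Hx2 y ltac:(lra)); tauto);
    apply Hleast in UB; lra. }
  assert (Hii : 0 < H sp).
  { destruct (Req_dec sp del) as [E|E]. rewrite E; auto.
    destruct (MVT_cor2 H dH del sp) as [c [Hc1 Hc2]]; [lra| |].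
    { intros c Hc0. apply DHs. lra. }
    destruct (Hi c ltac:(lra)) as [A B].
    pose proof (HDpos c ltac:(lra) ltac:(lra) ltac:(lra)). nra. }
  assert (Hiii : W sp <= 0).
  { destruct (Req_dec sp del) as [E|E]. rewrite E; lra.
    destruct (Rle_or_lt (W sp) 0) as [A|A]; auto. exfalso.
    destruct (cont_eps W sp _ (DWs sp ltac:(lra)) (W sp) A) as [d [Hd Hdd]].
    set (y := Rmax del (sp - d / 2)).
    assert (y1 : del <= y) by apply Rmax_l. assert (y2 : sp - d / 2 <= y) by apply Rmax_r.
    assert (y3 : y < sp) by (unfold y; apply Rmax_lub_lt; lra).
    specialize (Hdd y ltac:(rewrite Rabs_left; lra)).
    destruct (Hi y ltac:(lra)) as [B _]. apply Rabs_def2 in Hdd. lra. }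
  assert (Hiv : W sp = 0).
  { destruct Hiii as [A|A]; auto. exfalso.
    assert (S3 : sp < T) by (destruct S2 as [S2|S2]; auto; rewrite S2 in A; lra).
    destruct (cont_eps W sp _ (DWs sp ltac:(lra)) (- W sp) ltac:(lra)) as [d1 [Hd1' Hdd1]].
    destruct (cont_eps H sp _ (DHs sp ltac:(lra)) (H sp) Hii) as [d2 [Hd2' Hdd2]].
    set (x := Rmin (sp + Rmin d1 d2 / 2) T).
    assert (0 < Rmin d1 d2) by (apply Rmin_pos; lra).
    assert (Rmin d1 d2 <= d1) by apply Rmin_l. assert (Rmin d1 d2 <= d2) by apply Rmin_r.
    assert (x1 : x <= sp + Rmin d1 d2 / 2) by apply Rmin_l. assert (x2 : x <= T) by apply Rmin_r.
    assert (x3 : sp < x) by (unfold x; apply Rmin_glb_lt; lra).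
    assert (Ex : E0 x).
    { split. lra. intros y Hy. destruct (Rlt_or_le y sp) as [Y|Y]. apply Hi; lra.
      assert (Rabs (y - sp) < d1) by (rewrite Rabs_right; lra).
      assert (Rabs (y - sp) < d2) by (rewrite Rabs_right; lra).
      specialize (Hdd1 y ltac:(lra)). specialize (Hdd2 y ltac:(lra)).
      apply Rabs_def2 in Hdd1. apply Rabs_def2 in Hdd2. lra. }
    apply Hub in Ex. lra. }
  assert (S4 : del < sp) by (destruct S1 as [S1|S1]; auto; rewrite <- S1 in Hiv; lra).
  pose proof (HDneg sp ltac:(lra) Hiv Hii) as Neg.
  destruct (left_incr W sp _ (DWs sp ltac:(lra)) Neg (sp - del) ltac:(lra)) as [y [Hy1 Hy2]].
  destruct (Hi y ltac:(lra)) as [A _]. lra.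
Qed.
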